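(* The Heisenberg group $\mathrm{UT}_3(\mathbb{Z})$ of upper unitriangular $3\times 3$ integer matrices is not strongly verbally closed.
   Context: A subgroup $H$ of a group $G$ is verbally closed in $G$ if every equation $w(x_1,\dots,x_n)=h$, where $w$ is an element of the free group $F(x_1,\dots,x_n)$ and $h\in H$, that has a solution in $G$ has a solution in $H$. $H$ is algebraically closed in $G$ if every finite system of equations $\{w_1=1,\dots,w_m=1\}$ with $w_i\in H*F(x_1,\dots,x_n)$ that has a solution in $G$ has a solution in $H$. A group $H$ is strongly verbally closed if it is algebraically closed in every group containing $H$ as a verbally closed subgroup. *)

(* Defs.v *)
From Stdlib Require Import List.
From mathcomp Require Import all_boot all_order all_algebra.
Set Implicit Arguments. Unset Strict Implicit. Unset Printing Implicit Defensive.
Import Order.TTheory GRing.Theory Num.Theory.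
Local Open Scope ring_scope.

Record group := Group {
  gcar :> Type;
  gmul : gcar -> gcar -> gcar;
  gone : gcar;
  ginv : gcar -> gcar;
  gmulA : forall x y z, gmul x (gmul y z) = gmul (gmul x y) z;
  gmul1 : forall x, gmul gone x = x;
  gmulV : forall x, gmul (ginv x) x = gone
}.

Definition unitriangular n (A : 'M[int]_n) : bool :=
  [forall i : 'I_n, forall j : 'I_n, ((j < i)%N ==> (A i j == 0)) && ((i == j) ==> (A i j == 1))].

Lemma unitriangularP n (A : 'M[int]_n) :
  reflect ((forall i j : 'I_n, (j < i)%N -> A i j = 0) /\ (forall i, A i i = 1))
          (unitriangular A).
Proof.
apply: (iffP forallP) => [H|[H1 H2] i].
  split=> [i j lt|i].
    by have /forallP/(_ j)/andP[/implyP/(_ lt)/eqP] := H i.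
  by have /forallP/(_ i)/andP[_ /implyP/(_ (eqxx i))/eqP] := H i.
apply/forallP=> j; apply/andP; split; apply/implyP => h.
  by rewrite H1.
by move/eqP: h => <-; rewrite H2.
Qed.

Lemma unitriangularM n (A B : 'M[int]_n) :
  unitriangular A -> unitriangular B -> unitriangular (A *m B).
Proof.
move=> /unitriangularP[A0 A1] /unitriangularP[B0 B1]; apply/unitriangularP.
split=> [i j lt|i]; rewrite mxE.
  apply: big1 => k _; case: (ltnP k i) => hk; first by rewrite A0 ?mul0r.
  by rewrite B0 ?mulr0 //; apply: leq_trans lt hk.
rewrite (bigD1 i) //= A1 B1 mul1r big1 ?addr0 // => k /negbTE nk.
case: (ltngtP k i) => hk; first by rewrite A0 ?mul0r.
  by rewrite B0 ?mulr0.
by move/val_inj: hk nk => ->; rewrite eqxx.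
Qed.

Definition UT3 := {A : 'M[int]_3 | unitriangular A}.

Definition UT3_mul (x y : UT3) : UT3 :=
  exist _ (sval x *m sval y) (unitriangularM (svalP x) (svalP y)).

(** An element of the free group F(x_1, ..., x_n) is represented by a word,
    i.e. a list of letters (j, b) standing for x_j (b = false) or x_j^{-1}
    (b = true).  An element of H * F(x_1,...,x_n) is a word whose letters are
    either constants h in H or such variable letters. Evaluation does not
    depend on the chosen word representing the free-product element. *)
Definition letter := (nat * bool)%type.

Section Eval.
Variable G : group.

Definition eval_letter (s : nat -> G) (l : letter) : G :=
  if l.2 then ginv (s l.1) else s l.1.

Definition eval_word (s : nat -> G) (w : seq letter) : G :=
  foldr (fun l acc => gmul (eval_letter s l) acc) (gone G) w.

Definition eval_cword (H : Type) (f : H -> G) (s : nat -> G)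
  (w : seq (H + letter)) : G :=
  foldr (fun l acc => gmul (match l with
                            | inl h => f h
                            | inr a => eval_letter s a end) acc) (gone G) w.
End Eval.

(** H is embedded in G via the injective homomorphism f; "solution in H"
    means a solution in G all of whose values lie in f(H). *)
Definition is_embedding (H : Type) (mulH : H -> H -> H) (G : group) (f : H -> G) :=
  injective f /\ forall x y, f (mulH x y) = gmul (f x) (f y).

Definition verbally_closed (H : Type) (G : group) (f : H -> G) : Prop :=
  forall (w : seq letter) (h : H),
    (exists s : nat -> G, eval_word s w = f h) ->
    exists t : nat -> H, eval_word (fun i => f (t i)) w = f h.

Definition algebraically_closed (H : Type) (G : group) (f : H -> G) : Prop :=
  forall (S : seq (seq (H + letter))),
    (exists s : nat -> G, forall w, List.In w S -> eval_cword f s w = gone G) ->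
    exists t : nat -> H, forall w, List.In w S ->
      eval_cword f (fun i => f (t i)) w = gone G.

Definition strongly_verbally_closed (H : Type) (mulH : H -> H -> H) : Prop :=
  forall (G : group) (f : H -> G), is_embedding mulH f ->
    verbally_closed f -> algebraically_closed f.

(* Main.v *)
Require Import Defs.
From Stdlib Require Import FunctionalExtensionality.
From mathcomp Require Import all_boot all_order all_algebra.
From mathcomp Require Import ring lra zify.
Set Implicit Arguments. Unset Strict Implicit. Unset Printing Implicit Defensive.
Import Order.TTheory GRing.Theory Num.Theory.
Local Open Scope ring_scope.

Section Heis.
Variable S : comPzRingType.
Definition hmul (a b : S * S * S) : S * S * S :=
  let: (x, y, c) := a in let: (x', y', c') := b in (x + x', y + y', c + c' + x * y').
Definition hinv (a : S * S * S) : S * S * S :=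
  let: (x, y, c) := a in (- x, - y, - c + x * y).
Lemma hmulA x y z : hmul x (hmul y z) = hmul (hmul x y) z.
Proof. case: x => [[x1 x2] x3]; case: y => [[y1 y2] y3]; case: z => [[z1 z2] z3] /=.
congr (_, _, _); ring. Qed.
Lemma hmul1 x : hmul (0, 0, 0) x = x.
Proof. case: x => [[x1 x2] x3] /=; congr (_, _, _); ring. Qed.
Lemma hmulV x : hmul (hinv x) x = (0, 0, 0).
Proof. case: x => [[x1 x2] x3] /=; congr (_, _, _); ring. Qed.
Definition Heis : group := @Defs.Group (S*S*S)%type hmul (0,0,0) hinv hmulA hmul1 hmulV.
End Heis.

Section Prod.
Variable F : nat -> group.
Definition pmul (a b : forall k, F k) : forall k, F k := fun k => gmul (a k) (b k).
Definition pone : forall k, F k := fun k => gone (F k).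
Definition pinv (a : forall k, F k) : forall k, F k := fun k => ginv (a k).
Lemma pmulA x y z : pmul x (pmul y z) = pmul (pmul x y) z.
Proof. apply: functional_extensionality_dep => k; exact: gmulA. Qed.
Lemma pmul1 x : pmul pone x = x.
Proof. apply: functional_extensionality_dep => k; exact: gmul1. Qed.
Lemma pmulV x : pmul (pinv x) x = pone.
Proof. apply: functional_extensionality_dep => k; exact: gmulV. Qed.
Definition PG : group := @Defs.Group (forall k, F k) pmul pone pinv pmulA pmul1 pmulV.
End Prod.

Definition G := PG (fun k => Heis [the comPzRingType of (ordinal k.+2)]).

Lemma eval_word_hom (G1 G2 : Defs.group) (phi : G1 -> G2) :
  (forall x y, phi (gmul x y) = gmul (phi x) (phi y)) ->
  (forall x, phi (ginv x) = ginv (phi x)) -> phi (gone G1) = gone G2 ->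
  forall s w, phi (eval_word s w) = eval_word (fun i => phi (s i)) w.
Proof.
move=> hM hV h1 s; elim=> [|[j b] w IH] //=; rewrite hM IH /eval_letter.
by case: b => //=; rewrite hV.
Qed.

Lemma eval_cword_hom (G1 G2 : Defs.group) (phi : G1 -> G2) (H : Type) (f : H -> G1) :
  (forall x y, phi (gmul x y) = gmul (phi x) (phi y)) ->
  (forall x, phi (ginv x) = ginv (phi x)) -> phi (gone G1) = gone G2 ->
  forall s w, phi (eval_cword f s w) = eval_cword (fun h => phi (f h)) (fun i => phi (s i)) w.
Proof.
move=> hM hV h1 s; elim=> [|l w IH] //=; rewrite hM IH /eval_letter.
by case: l => [//|[j b]]; case: b => //=; rewrite hV.
Qed.

Lemma eval_word_ext (G1 : Defs.group) s s' w : (forall i, s i = s' i) ->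
  @eval_word G1 s w = eval_word s' w.
Proof. move=> e; elim: w => [|l w IH] //=; rewrite IH /eval_letter e. by []. Qed.

Definition HZ := Heis int.
Definition redk (k : nat) (z : int) : 'Z_(k.+2) := z%:~R.
Definition redH (k : nat) (t : HZ) : Heis [the comPzRingType of 'Z_(k.+2)] :=
  let: (x, y, c) := t in (redk k x, redk k y, redk k c).
Definition phi (t : HZ) : G := fun k => redH k t.

Lemma redH_mul k x y : redH k (gmul x y) = gmul (redH k x) (redH k y).
Proof.
case: x => [[x1 x2] x3]; case: y => [[y1 y2] y3] /=.
by rewrite /redk !rmorphD rmorphM.
Qed.
Lemma redH_inv k x : redH k (ginv x) = ginv (redH k x).
Proof.
case: x => [[x1 x2] x3] /=.
by rewrite /redk !rmorphD !rmorphN rmorphM.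
Qed.
Lemma redH_one k : redH k (gone HZ) = gone _.
Proof. by rewrite /= /redk rmorph0. Qed.

Lemma phi_mul x y : phi (gmul x y) = gmul (phi x) (phi y).
Proof. apply: functional_extensionality_dep => k; exact: redH_mul. Qed.
Lemma phi_inv x : phi (ginv x) = ginv (phi x).
Proof. apply: functional_extensionality_dep => k; exact: redH_inv. Qed.
Lemma phi_one : phi (gone HZ) = gone G.
Proof. apply: functional_extensionality_dep => k; exact: redH_one. Qed.

Lemma redk_eq0 k z : (redk k z == 0) = ((k.+2)%:Z %| z)%Z.
Proof.
rewrite dvdzE /=.
have h m : ((m%:R : 'Z_(k.+2)) == 0) = (k.+2 %| m)%N.
  by rewrite -val_eqE /= val_Zp_nat.
case: z => n; rewrite /redk.
  by rewrite -pmulrn h.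
by rewrite NegzE mulrNz oppr_eq0 -pmulrn h.
Qed.

Lemma redk_eq k a b : (redk k a == redk k b) = ((k.+2)%:Z %| a - b)%Z.
Proof. by rewrite -redk_eq0 /redk mulrzBr subr_eq0. Qed.

Lemma redk_inj a b : (forall k, redk k a = redk k b) -> a = b.
Proof.
move=> H; have /eqP := H `|a - b|%N; rewrite redk_eq dvdzE /= => hd.
apply/eqP; rewrite -subr_eq0 -absz_eq0; apply/eqP.
case E: `|a - b|%N => [//|m]; move: hd; rewrite E => /dvdn_leq.
lia.
Qed.

Definition i0 : 'I_3 := @Ordinal 3 0 isT.
Definition i1 : 'I_3 := @Ordinal 3 1 isT.
Definition i2 : 'I_3 := @Ordinal 3 2 isT.
Definition toHeis (A : 'M[int]_3) : HZ := (A i0 i1, A i1 i2, A i0 i2).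
Definition fE (A : UT3) : G := phi (toHeis (sval A)).

Lemma ut_entries (A : 'M[int]_3) : unitriangular A ->
  [/\ A i0 i0 = 1, A i1 i1 = 1, A i2 i2 = 1 & [/\ A i1 i0 = 0, A i2 i0 = 0 & A i2 i1 = 0]].
Proof. by move/unitriangularP=> [A0 A1]; rewrite !A1 !A0. Qed.

Lemma toHeis_mul A B : unitriangular A -> unitriangular B ->
  toHeis (A *m B) = gmul (toHeis A) (toHeis B).
Proof.
move=> /ut_entries [a00 a11 a22 [a10 a20 a21]] /ut_entries [b00 b11 b22 [b10 b20 b21]].
rewrite /toHeis /= !mxE !big_ord_recl !big_ord0.
have e2 : lift ord0 (lift ord0 ord0) = i2 :> 'I_3 by apply: val_inj.
have e1 : lift ord0 ord0 = i1 :> 'I_3 by apply: val_inj.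
have e0 : ord0 = i0 :> 'I_3 by apply: val_inj.
rewrite e2 e1 e0 ?a00 ?a11 ?a22 ?a10 ?a20 ?a21 ?b00 ?b11 ?b22 ?b10 ?b20 ?b21.
congr (_, _, _); ring.
Qed.

Lemma ord3P (i : 'I_3) : [\/ i = i0, i = i1 | i = i2].
Proof.
case: i => [[|[|[|//]]] Hi]; [apply: Or31 | apply: Or32 | apply: Or33]; exact: val_inj.
Qed.

Lemma toHeis_inj A B : unitriangular A -> unitriangular B -> toHeis A = toHeis B -> A = B.
Proof.
move=> /ut_entries [a00 a11 a22 [a10 a20 a21]] /ut_entries [b00 b11 b22 [b10 b20 b21]].
case=> e01 e12 e02; apply/matrixP => i j.
by case: (ord3P i) => ->; case: (ord3P j) => ->;
  rewrite ?a00 ?a11 ?a22 ?a10 ?a20 ?a21 ?b00 ?b11 ?b22 ?b10 ?b20 ?b21.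
Qed.

Lemma fE_emb : is_embedding UT3_mul fE.
Proof.
split.
  move=> [A hA] [B hB]; rewrite /fE /= => H; apply: val_inj => /=.
  apply: toHeis_inj; [exact: hA | exact: hB |].
  case EA: (toHeis A) H => [[x1 x2] x3]; case EB: (toHeis B) => [[y1 y2] y3] H.
  have h k : redH k (x1, x2, x3) = redH k (y1, y2, y3).
    by have := f_equal (fun g => g k) H.
  congr (_, _, _); apply: redk_inj => k; have := h k; case; by [].
move=> [A hA] [B hB]; rewrite /fE /UT3_mul /= (toHeis_mul hA hB) phi_mul.
by [].
Qed.

Definition sgnb (b : bool) : int := if b then -1 else 1.
Fixpoint Ecoef (w : seq letter) (j : nat) : int :=
  match w with
  | [::] => 0
  | l :: r => Ecoef r j + (if l.1 == j then sgnb l.2 else 0)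
  end.
Fixpoint Mcoef (w : seq letter) (i j : nat) : int :=
  match w with
  | [::] => 0
  | l :: r => Mcoef r i j +
      (if l.1 == i then (if l.2 then (if i == j then 1 else 0) - Ecoef r j else Ecoef r j) else 0)
  end.

Lemma sum_delta n k (F : nat -> int) : (k < n)%N ->
  \sum_(i < n) (if k == i then F i else 0) = F k.
Proof.
move=> hk; rewrite (bigD1 (Ordinal hk)) //= eqxx big1 ?addr0 // => i.
by rewrite -val_eqE /= eq_sym => /negbTE ->.
Qed.

Definition AX n w (T : nat -> HZ) := \sum_(i < n) Ecoef w i * (T i).1.1.
Definition AY n w (T : nat -> HZ) := \sum_(i < n) Ecoef w i * (T i).1.2.
Definition AC n w (T : nat -> HZ) := \sum_(i < n) Ecoef w i * (T i).2.
Definition QQ n w (T : nat -> HZ) :=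
  \sum_(i < n) \sum_(j < n) Mcoef w i j * ((T i).1.1 * (T j).1.2).

Lemma eval_formula (T : nat -> HZ) w n : all (fun l : letter => l.1 < n)%N w ->
  eval_word T w = (AX n w T, AY n w T, AC n w T + QQ n w T).
Proof.
rewrite /AX /AY /AC /QQ.
elim: w => [|[k b] r IH] /=.
  by move=> _; rewrite !big1 // => i _; rewrite ?mul0r // big1 // => j _; rewrite mul0r.
case/andP=> hk /IH ->; rewrite /eval_letter /=.
have dl (F : nat -> int) : \sum_(i < n) (Ecoef r i + (if k == i then sgnb b else 0)) * F i
    = \sum_(i < n) Ecoef r i * F i + sgnb b * F k.
  rewrite -(sum_delta (fun i => sgnb b * F i) hk) -big_split /=.
  by apply: eq_bigr => i _; case: (k == i); rewrite ?mul0r ?addr0 // mulrDl.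
rewrite (dl (fun i => (T i).1.1)) (dl (fun i => (T i).1.2)) (dl (fun i => (T i).2)).
have dq : \sum_(i < n) \sum_(j < n) (Mcoef r i j +
      (if k == i then (if b then (if i == j then 1 else 0) - Ecoef r j else Ecoef r j) else 0))
      * ((T i).1.1 * (T j).1.2) =
   \sum_(i < n) \sum_(j < n) Mcoef r i j * ((T i).1.1 * (T j).1.2) +
   \sum_(j < n) (if b then (if k == j then 1 else 0) - Ecoef r j else Ecoef r j) * ((T k).1.1 * (T j).1.2).
  rewrite -(sum_delta (fun i => \sum_(j < n)
      (if b then (if i == j then 1 else 0) - Ecoef r j else Ecoef r j) * ((T i).1.1 * (T j).1.2)) hk).
  rewrite -big_split /=; apply: eq_bigr => i _.
  case: (k == i); last by rewrite addr0; apply: eq_bigr => j _; rewrite addr0.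
  by rewrite -big_split; apply: eq_bigr => j _; rewrite mulrDl.
rewrite dq.
clear dl; case E: (T k) => [[xk yk] ck]; case: b dq => dq /=.
  set Y := \sum_(i < n) Ecoef r i * (T i).1.2.
  have -> : \sum_(j < n) ((if k == j then 1 else 0) - Ecoef r j) * (xk * (T j).1.2)
     = xk * yk - xk * Y.
    have -> : xk * yk = \sum_(j < n) (if k == j then xk * (T j).1.2 else 0).
      by rewrite (sum_delta (fun j => xk * (T j).1.2) hk) E.
    rewrite /Y mulr_sumr -sumrB; apply: eq_bigr => j _; case: eqP => _; ring.
  congr (_, _, _); ring.
have -> : \sum_(j < n) Ecoef r j * (xk * (T j).1.2) = xk * \sum_(i < n) Ecoef r i * (T i).1.2.
  by rewrite mulr_sumr; apply: eq_bigr => j _; ring.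
congr (_, _, _); ring.
Qed.

Lemma vec_bezout (E : nat -> int) n : exists (d : int) (u : nat -> int),
  [/\ 0 <= d, (forall i, (i < n)%N -> (d %| E i)%Z) & \sum_(i < n) E i * u i = d].
Proof.
elim: n => [|n [d [u [d0 dE du]]]].
  by exists 0, (fun _ => 0); split => //; rewrite big_ord0.
have [al [be h]] := Bezoutz d (E n).
exists (gcdz d (E n)), (fun i => if (i < n)%N then al * u i else be); split => //.
  move=> i; rewrite ltnS leq_eqVlt => /orP [/eqP ->|hi]; first exact: dvdz_gcdr.
  exact: dvdz_trans (dvdz_gcdl _ _) (dE _ hi).
rewrite big_ord_recr /= ltnn -h -du mulr_sumr; congr (_ + _); last by rewrite mulrC.
by apply: eq_bigr => i _; rewrite ltn_ord; ring.
Qed.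

Lemma bilin_gcd n (M : nat -> nat -> int) : exists (g : int) (a b : nat -> int),
  (forall i j, (i < n)%N -> (j < n)%N -> (g %| M i j)%Z) /\
  \sum_(i < n) \sum_(j < n) M i j * (a i * b j) = g.
Proof.
case: n => [|m].
  by exists 0, (fun _ => 0), (fun _ => 0); split => //; rewrite big_ord0.
pose A : 'M[int]_(m.+1) := \matrix_(i, j) M i j.
have [L uL [R uR [d sd eA]]] := int_Smith_normal_form A.
pose D : 'M[int]_(m.+1) := \matrix_(i, j) (d`_i *+ (i == j :> nat)).
have d0 : forall l, (d`_0 %| d`_l)%Z.
  move=> l; case: (ltnP l (size d)) => hl; last by rewrite nth_default.
  apply: (sorted_leq_nth dvdz_trans dvdzz 0 sd) => //; rewrite inE //.
  by apply: leq_ltn_trans hl.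
exists d`_0, (fun i => invmx L ord0 (inord i)), (fun j => invmx R (inord j) ord0); split.
  move=> i j hi hj.
  have -> : M i j = A (inord i) (inord j) by rewrite mxE !inordK.
  rewrite eA !mxE; apply: rpred_sum => k _; apply: dvdz_mulr.
  rewrite ?mxE; apply: rpred_sum => l _; apply: dvdz_mull.
  rewrite ?mxE; case: (l == k :> nat); rewrite ?mulr0n ?mulr1n //; exact: d0.
have : (invmx L *m A *m invmx R) ord0 ord0 = d`_0.
  by rewrite eA !mulmxA mulmxK // -!mulmxA mulKmx // mxE eqxx mulr1n.
rewrite mxE => <-; rewrite exchange_big /=; apply: eq_bigr => i _.
rewrite mxE mulr_suml; apply: eq_bigr => j _; rewrite !mxE !inord_val; ring.
Qed.

Lemma dvd_all0 (z : int) : (forall N, (1 < N)%N -> (N%:Z %| z)%Z) -> z = 0.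
Proof.
move=> H; have := H (`|z|.+2)%N isT; rewrite dvdzE /= => hd.
apply/eqP; rewrite -absz_eq0; apply/eqP.
case E: `|z|%N hd => [//|m]; move/dvdn_leq; lia.
Qed.

Lemma QQ_ext n w (T T' : nat -> HZ) : (forall i, (T i).1.1 = (T' i).1.1) ->
  (forall i, (T i).1.2 = (T' i).1.2) -> QQ n w T = QQ n w T'.
Proof.
by move=> h1 h2; apply: eq_bigr => i _; apply: eq_bigr => j _; rewrite h1 h2.
Qed.

Lemma core w n (hn : all (fun l : letter => l.1 < n)%N w) (hx hy hc : int) :
  (forall N, (1 < N)%N -> exists T : nat -> HZ,
     [/\ (N%:Z %| AX n w T - hx)%Z, (N%:Z %| AY n w T - hy)%Z &
         (N%:Z %| AC n w T + QQ n w T - hc)%Z]) ->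
  exists T : nat -> HZ, eval_word T w = (hx, hy, hc).
Proof.
move=> Hsol.
have [d [u [d0 dE du]]] := vec_bezout (Ecoef w) n.
have [d00|dn0] := eqVneq d 0.
  have E0 i : (i < n)%N -> Ecoef w i = 0.
    by move=> hi; have := dE i hi; rewrite d00 dvd0z => /eqP.
  have Z0 (F : nat -> int) : \sum_(i < n) Ecoef w i * F i = 0.
    by apply: big1 => i _; rewrite E0 ?mul0r.
  have ZX T : AX n w T = 0 by exact: (Z0 (fun i => (T i).1.1)).
  have ZY T : AY n w T = 0 by exact: (Z0 (fun i => (T i).1.2)).
  have ZC T : AC n w T = 0 by exact: (Z0 (fun i => (T i).2)).
  have hx0 : hx = 0.
    apply: dvd_all0 => N /Hsol [T [h _ _]]; move: h; rewrite ZX sub0r.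
    by rewrite rpredN.
  have hy0 : hy = 0.
    apply: dvd_all0 => N /Hsol [T [_ h _]]; move: h; rewrite ZY sub0r.
    by rewrite rpredN.
  have [g [a [b [gM gab]]]] := bilin_gcd n (Mcoef w).
  have gQ (T : nat -> HZ) : (g %| QQ n w T)%Z.
    apply: rpred_sum => i _; apply: rpred_sum => j _; apply: dvdz_mulr; exact: gM.
  have ghc : (g %| hc)%Z.
    have [g0|gn0] := eqVneq g 0.
      rewrite g0 dvd0z; apply/eqP; apply: dvd_all0 => N /Hsol [T [_ _ h]].
      move: h; rewrite ZC add0r; have := gQ T; rewrite g0 dvd0z => /eqP ->.
      by rewrite sub0r rpredN.
    have /Hsol [T [_ _ h]] : (1 < 2 * `|g|)%N.
      have gp : (0 < `|g|)%N by rewrite absz_gt0.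
      lia.
    move: h; rewrite ZC add0r => h.
    have h2 : (g %| (2 * `|g|)%N%:Z)%Z by rewrite dvdzE /= dvdn_mull.
    have := rpredB (gQ T) (dvdz_trans h2 h); rewrite opprB addrC subrK //.
  case/dvdzP: ghc => q hq.
  exists (fun i => (a i, q * b i, 0)).
  rewrite (eval_formula _ hn) ZX ZY ZC /QQ hx0 hy0 hq add0r -gab mulr_sumr.
  congr (_, _, _); apply: eq_bigr => i _; rewrite mulr_sumr; apply: eq_bigr => j _ /=; ring.
have dpos : (0 < `|d|)%N by rewrite absz_gt0.
have dN : (`|d|%:Z) = d by rewrite gez0_abs.
have /Hsol [T [hX hY hC]] : (1 < 2 * `|d| ^ 2)%N.
  have h1 : (1 <= `|d| ^ 2)%N by rewrite expn_gt0 dpos.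
  lia.
have d2N : (d ^+ 2 %| (2 * `|d| ^ 2)%N%:Z)%Z.
  by rewrite dvdzE abszX absz_nat dvdn_mull.
have d2X := dvdz_trans d2N hX; have d2Y := dvdz_trans d2N hY.
have dC : (d %| AC n w T + QQ n w T - hc)%Z.
  apply: dvdz_trans _ hC; apply: dvdz_trans d2N; rewrite dvdzE /= abszX.
  by rewrite expnS dvdn_mulr.
pose kA := ((hx - AX n w T) %/ d ^+ 2)%Z.
pose kB := ((hy - AY n w T) %/ d ^+ 2)%Z.
pose X i := (T i).1.1 + d * kA * u i.
pose Y i := (T i).1.2 + d * kB * u i.
pose T0 := fun i => (X i, Y i, 0 : int).
pose kC := ((hc - QQ n w T0) %/ d)%Z.
exists (fun i => (X i, Y i, kC * u i)).
rewrite (eval_formula _ hn).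
have hkA : kA * d ^+ 2 = hx - AX n w T.
  by apply: divzK; rewrite -opprB rpredN.
have hkB : kB * d ^+ 2 = hy - AY n w T.
  by apply: divzK; rewrite -opprB rpredN.
have dAC : (d %| AC n w T)%Z.
  by apply: rpred_sum => i _; apply: dvdz_mulr; apply: dE.
have dQ : (d %| QQ n w T0 - QQ n w T)%Z.
  rewrite -sumrB; apply: rpred_sum => i _; rewrite -sumrB; apply: rpred_sum => j _.
  rewrite -mulrBr; apply: dvdz_mull; rewrite /T0 /X /Y /=.
  apply/dvdzP; exists (kA * u i * (T j).1.2 + (T i).1.1 * kB * u j + d * kA * u i * kB * u j).
  ring.
have hkC : kC * d = hc - QQ n w T0.
  apply: divzK.
  have -> : hc - QQ n w T0 = - (AC n w T + QQ n w T - hc) + AC n w T - (QQ n w T0 - QQ n w T) by ring.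
  by rewrite rpredB // rpredD // rpredN.
congr (_, _, _).
- rewrite /AX /X; under eq_bigr do rewrite mulrDr.
  rewrite big_split /= -/(AX n w T) -[RHS](subrK (AX n w T) hx) -hkA addrC; congr (_ + _).
  transitivity (d * kA * \sum_(i < n) Ecoef w i * u i); last by rewrite du; ring.
  rewrite mulr_sumr; apply: eq_bigr => i _; ring.
- rewrite /AY /Y; under eq_bigr do rewrite mulrDr.
  rewrite big_split /= -/(AY n w T) -[RHS](subrK (AY n w T) hy) -hkB addrC; congr (_ + _).
  transitivity (d * kB * \sum_(i < n) Ecoef w i * u i); last by rewrite du; ring.
  rewrite mulr_sumr; apply: eq_bigr => i _; ring.
rewrite (@QQ_ext n w _ T0) // -[RHS](subrK (QQ n w T0) hc) -hkC; congr (_ + _).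
transitivity (kC * \sum_(i < n) Ecoef w i * u i); last by rewrite du.
rewrite /AC /= mulr_sumr; apply: eq_bigr => i _; ring.
Qed.

Definition mkM (t : HZ) : 'M[int]_3 := \matrix_(i, j)
  (if (i == j :> nat) then 1
   else if ((i : nat) == 0%N) && ((j : nat) == 1%N) then t.1.1
   else if ((i : nat) == 1%N) && ((j : nat) == 2%N) then t.1.2
   else if ((i : nat) == 0%N) && ((j : nat) == 2%N) then t.2 else 0).

Lemma mkM_ut t : unitriangular (mkM t).
Proof.
apply/unitriangularP; split.
  by move=> i j; case: (ord3P i) => ->; case: (ord3P j) => -> //= _; rewrite mxE.
by move=> i; rewrite mxE eqxx.
Qed.

Definition mk (t : HZ) : UT3 := exist _ (mkM t) (mkM_ut t).

Lemma toHeis_mk t : toHeis (sval (mk t)) = t.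
Proof. by case: t => [[x y] c]; rewrite /toHeis /= !mxE. Qed.

Lemma fE_mk t : fE (mk t) = phi t.
Proof. by rewrite /fE toHeis_mk. Qed.

Definition bound (w : seq letter) : nat := foldr (fun l m => maxn l.1.+1 m) 0%N w.
Lemma bound_ok w : all (fun l : letter => l.1 < bound w)%N w.
Proof.
elim: w => [|l w IH] //=; rewrite leq_max ltnSn /=.
by apply: sub_all IH => l' /= h; rewrite leq_max h orbT.
Qed.

Definition liftZ k (x : 'Z_(k.+2)) : int := (nat_of_ord x)%:Z.
Lemma redk_lift k x : redk k (liftZ x) = x.
Proof. by rewrite /redk /liftZ -pmulrn natr_Zp. Qed.
Definition liftH k (t : Heis [the comPzRingType of 'Z_(k.+2)]) : HZ :=
  let: (x, y, c) := t in (liftZ x, liftZ y, liftZ c).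
Lemma redH_lift k t : redH k (liftH t) = t.
Proof. by case: t => [[x y] c] /=; rewrite !redk_lift. Qed.

Lemma fE_verbal : verbally_closed fE.
Proof.
move=> w h [s hs].
pose n := bound w; have hn := bound_ok w.
case Eh: (toHeis (sval h)) => [[hx hy] hc].
have [T hT] : exists T : nat -> HZ, eval_word T w = (hx, hy, hc).
  apply: (core hn) => N hN.
  have [k ->] : exists k, N = k.+2 by exists N.-2; lia.
  exists (fun i => liftH (s i k)).
  have := f_equal (fun g => g k) hs.
  rewrite (eval_word_hom (phi := fun g : G => g k)) // /fE Eh /=.
  rewrite -(eval_word_ext _ (fun i => redH_lift (s i k))).
  rewrite -(eval_word_hom (phi := redH k)); last 3 first.
  - exact: redH_mul.
  - exact: redH_inv.
  - exact: redH_one.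
  rewrite (eval_formula _ hn) /= => -[/eqP e1 /eqP e2 /eqP e3].
  by rewrite -!redk_eq e1 e2 e3.
exists (fun i => mk (T i)).
rewrite (eval_word_ext _ (fun i => fE_mk (T i))).
rewrite -(eval_word_hom (phi := phi)); last 3 first.
- exact: phi_mul.
- exact: phi_inv.
- exact: phi_one.
by rewrite hT /fE Eh.
Qed.

Lemma odd_split N : (0 < N)%N -> exists m a, odd m /\ N = (m * 2 ^ a)%N.
Proof.
elim: N {-2}N (leqnn N) => [|M IH] N hN hpos; first lia.
case hodd: (odd N); first by exists N, 0%N; rewrite expn0 muln1.
have e := odd_double_half N; rewrite hodd add0n in e.
have [m [a [hm ea]]] : exists m a, odd m /\ N./2 = (m * 2 ^ a)%N.
  apply: IH; lia.
by exists m, a.+1; split => //; rewrite -e ea expnS -!muln2; lia.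
Qed.

Lemma local_sol k : exists p q : 'Z_(k.+2), 3 * p - 2 * q + 1 = 0 /\ p * q = 0.
Proof.
have [m [a [hm eN]]] := odd_split (isT : (0 < k.+2)%N).
have [u [v h]] := Bezoutz (3 * m)%N%:Z (2 ^ a.+1)%N%:Z.
have g1 : gcdz (3 * m)%N%:Z (2 ^ a.+1)%N%:Z = 1.
  rewrite /gcdz !absz_nat; apply/eqP.
  by change (coprime (3 * m) (2 ^ a.+1)); rewrite coprime_pexpr // coprimen2 oddM hm.
rewrite g1 in h.
exists (redk k (- (u * m%:Z))), (redk k (v * (2 ^ a)%N%:Z)); split.
  have -> : 3 * redk k (- (u * m%:Z)) - 2 * redk k (v * (2 ^ a)%N%:Z) + 1
      = redk k (3 * (- (u * m%:Z)) - 2 * (v * (2 ^ a)%N%:Z) + 1).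
    by rewrite /redk rmorphD rmorphB !rmorphM /= rmorph1 !rmorph_nat.
  have -> : 3 * (- (u * m%:Z)) - 2 * (v * (2 ^ a)%N%:Z) + 1 = - (u * (3 * m)%N%:Z + v * (2 ^ a.+1)%N%:Z) + 1.
    rewrite !PoszM expnS PoszM; ring.
  by rewrite h addNr /redk rmorph0.
rewrite /redk -rmorphM /=; apply/eqP; rewrite -/(redk k _) redk_eq0.
apply/dvdzP; exists (- (u * v)); rewrite eN !PoszM; ring.
Qed.

Lemma local_sol' k : exists pq : ('Z_(k.+2) * 'Z_(k.+2))%type,
  (3 * pq.1 - 2 * pq.2 + 1 == 0) && (pq.1 * pq.2 == 0).
Proof. by have [p [q [h1 h2]]] := local_sol k; exists (p, q); rewrite h1 h2 eqxx. Qed.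

Definition Vr (j : nat) (inv : bool) : UT3 + letter := inr (j, inv).
Definition Cs (t : HZ) : UT3 + letter := inl (mk t).
Definition eq1 := [:: Vr 0 false; Cs (1, 0, 0); Vr 0 true; Cs (-1, 0, 0)].
Definition eq2 := [:: Vr 1 false; Cs (0, 1, 0); Vr 1 true; Cs (0, -1, 0)].
Definition eq3 := [:: Vr 0 false; Vr 1 false; Vr 0 true; Vr 1 true].
Definition wPb := [:: Vr 0 false; Cs (0, 1, 0); Vr 0 true; Cs (0, -1, 0)].
Definition wQa := [:: Vr 1 false; Cs (1, 0, 0); Vr 1 true; Cs (-1, 0, 0)].
Definition eq4 := wPb ++ wPb ++ wPb ++ wQa ++ wQa ++ [:: Cs (0, 0, 1)].
Definition Sys : seq (seq (UT3 + letter)) := [:: eq1; eq2; eq3; eq4].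

Lemma phi_inj x y : phi x = phi y -> x = y.
Proof.
case: x => [[x1 x2] x3]; case: y => [[y1 y2] y3] H.
have h k : redH k (x1, x2, x3) = redH k (y1, y2, y3) by have := f_equal (fun g => g k) H.
by congr (_, _, _); apply: redk_inj => k; have := h k; case.
Qed.

Lemma sys_int (T : nat -> HZ) :
  (forall w, List.In w Sys -> eval_cword (fun h => toHeis (sval h)) T w = gone HZ) -> False.
Proof.
move=> H.
case EP: (T 0%N) => [[px py] pc]; case EQ: (T 1%N) => [[qx qy] qc].
have := H eq1 (or_introl erefl); have := H eq2 (or_intror (or_introl erefl)).
have := H eq3 (or_intror (or_intror (or_introl erefl))).
have := H eq4 (or_intror (or_intror (or_intror (or_introl erefl)))).
have e0f : eval_letter T (0%N, false) = (px, py, pc) by rewrite /eval_letter /= EP.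
have e0t : eval_letter T (0%N, true) = hinv (px, py, pc) by rewrite /eval_letter /= EP.
have e1f : eval_letter T (1%N, false) = (qx, qy, qc) by rewrite /eval_letter /= EQ.
have e1t : eval_letter T (1%N, true) = hinv (qx, qy, qc) by rewrite /eval_letter /= EQ.
rewrite /eq1 /eq2 /eq3 /eq4 /wPb /wQa /Cs /Vr /= e0f e0t e1f e1t /= /mkM ?mxE /=.
move=> [_ _ h4] [_ _ h3] [_ _ h2] [_ _ h1].
have py0 : py = 0 by lia.
have qx0 : qx = 0 by lia.
subst py qx.
have hpq : px * qy = 0 by lia.
move/eqP: hpq; rewrite mulf_eq0 => /orP [/eqP e|/eqP e]; subst; lia.
Qed.

Lemma not_alg : ~ algebraically_closed fE.
Proof.
move=> H.
have [t ht] : exists t : nat -> UT3, forall w, List.In w Sys ->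
    eval_cword fE (fun i => fE (t i)) w = gone G.
  apply: H.
  pose pq k := xchoose (local_sol' k).
  exists (fun i => if i == 0%N then (fun k => ((pq k).1, 0, 0)) else (fun k => (0, (pq k).2, 0)) : G).
  move=> w hw; apply: functional_extensionality_dep => k.
  have /andP [/eqP h1 /eqP h2] := xchooseP (local_sol' k).
  rewrite -/(pq k) in h1 h2.
  rewrite (eval_cword_hom (phi := fun g : G => g k)) //.
  case: hw => [<-|[<-|[<-|[<-|[]]]]]; rewrite /eq1 /eq2 /eq3 /eq4 /wPb /wQa /Cs /Vr /= /mkM ?mxE /= /redk ?rmorph0 ?rmorph1 ?rmorphN ?rmorph1 /=;
    congr (_, _, _); rewrite ?mulr0 ?mul0r ?addr0 ?add0r ?oppr0 //.
  all: try ring.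
  - move: h1 h2; case: (pq k) => p q /= h1 h2.
    by transitivity (p * q); [ring | exact h2].
  - move: h1 h2; case: (pq k) => p q /= h1 h2.
    by transitivity (3 * p - 2 * q + 1); [ring | exact h1].
apply: (@sys_int (fun i => toHeis (sval (t i)))) => w hw.
apply: phi_inj; rewrite phi_one -(ht w hw).
rewrite (eval_cword_hom (phi := phi)).
all: try exact: phi_mul.
all: try exact: phi_inv.
all: try exact: phi_one.
all: by [].
Qed.

Theorem mainTheorem2 : ~ strongly_verbally_closed UT3_mul.
Proof.
move=> H; exact: not_alg (H G fE fE_emb fE_verbal).
Qed.
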